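(* Let $\mathsf{T}$ be a rooted plane tree, let $\delta\in\mathsf{Pop}(\mathcal{O}(\mathsf{T}))$, let $v\in\mathsf{T}$, and let $u\in M_\delta(v)$. Then $\delta(u)=\{u\}$. Moreover, if $w$ is a child of $v$ with $w\in\delta(v)$ and $u\in\Delta_{\delta(v)}(w)$, then for every integer $k\geq 1$ such that $w\in\mathsf{Pop}^k(\delta)(v)$, the set $\{u\}$ is a bead of the $w$-section of $\mathsf{Pop}^k(\delta)(v)$ in $\mathsf{Pop}^k(\delta)$.
   Context: A rooted plane tree $\mathsf{T}$ is a finite tree with a distinguished root, regarded as a poset $\leq_\mathsf{T}$ in which $v'\leq_\mathsf{T} v$ iff $v$ lies on the path from $v'$ to the root; children of $v$ are nodes covered by $v$. For a set $S$ of nodes and a node $u$, $\Delta_S(u)=\{x\in S:x\leq_\mathsf{T} u\}$. An ornament is a nonempty set of nodes inducing a connected subgraph; an ornamentation is a map $\delta$ from nodes to ornaments such that the unique maximal element of $\delta(v)$ is $v$ and any two sets $\delta(v),\delta(v')$ are nested or disjoint. $\mathcal{O}(\mathsf{T})$ is the set of ornamentations ordered by pointwise inclusion (a lattice with meet given by pointwise intersection); $\mathsf{Pop}(\delta)=\bigwedge(\{\delta\}\cup\{\delta':\delta'\lessdot\delta\})$ and $\mathsf{Pop}^k$ is its $k$-th iterate. For distinct nodes $u,v$, $v$ wraps $u$ in $\delta$ if $\delta(u)\subseteq\delta(v)$ and there is no node $x$ with $\delta(u)\subsetneq\delta(x)\subsetneq\delta(v)$; the reduction of $\delta(v)$ by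 such $u$ is $\delta(v)\setminus\Delta_{\delta(v)}(u)$; a minimal reduction is a reduction not properly contained in another reduction of $\delta(v)$; $M_\delta(v)$ is the set of nodes $u$ wrapped by $v$ such that the reduction of $\delta(v)$ by $u$ is minimal. For an ornamentation $\sigma$, a node $v$ and a child $v'$ of $v$ with $v'\in\sigma(v)$, the $v'$-section of $\sigma(v)$ is $\Delta_{\sigma(v)}(v')$. An ornament $\sigma(x)$ is a bead of this $v'$-section in $\sigma$ if $x\leq_\mathsf{T} v'$, $x\notin\sigma(v)$, and for every node $y$ on the path from $v'$ to $x$ (endpoints included), either $y\in\sigma(v)$ or $\sigma(y)=\{y\}$. *)

(* Defs.v *)
From mathcomp Require Import all_boot.
Set Implicit Arguments. Unset Strict Implicit. Unset Printing Implicit Defensive.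

(* The plane
   structure (ordering of children) plays no role in the notions below. *)
Record rtree (T : finType) := RTree {
  root : T;
  parent : T -> T;
  parent_root : parent root = root;
  reach_root : forall x : T, fconnect parent x root
}.

Section Orn.
Variables (T : finType) (t : rtree T).

Definition tle (x y : T) : bool := fconnect (parent t) x y.

Definition child (w v : T) : bool := (parent t w == v) && (w != v).

Definition adjIn (S : {set T}) : rel T :=
  fun x y => [&& x \in S, y \in S & (child x y || child y x)].

Definition ornament (S : {set T}) : bool :=
  (S != set0) && [forall x in S, forall y in S, connect (adjIn S) x y].

Definition ornamentation (d : {ffun T -> {set T}}) : bool :=
  [forall v, ornament (d v)] &&
  [forall v, (v \in d v) && [forall x in d v, tle x v]] &&
  [forall v, forall v', [|| d v \subset d v', d v' \subset d v
                          | [disjoint d v & d v']]].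

Definition ole (d1 d2 : {ffun T -> {set T}}) : bool :=
  [forall v, d1 v \subset d2 v].
Definition olt (d1 d2 : {ffun T -> {set T}}) : bool :=
  (d1 != d2) && ole d1 d2.

Definition covby (d' d : {ffun T -> {set T}}) : bool :=
  [&& ornamentation d', ornamentation d, olt d' d &
      [forall e : {ffun T -> {set T}},
         ~~ [&& ornamentation e, olt d' e & olt e d]]].

(* Pop(d): meet (pointwise intersection) of d and its lower covers *)
Definition pop (d : {ffun T -> {set T}}) : {ffun T -> {set T}} :=
  [ffun v => d v :&: \bigcap_(d' | covby d' d) d' v].

Definition Delta (S : {set T}) (u : T) : {set T} := [set x in S | tle x u].

Definition wraps (d : {ffun T -> {set T}}) (v u : T) : bool :=
  [&& u != v, d u \subset d v &
      ~~ [exists x, (d u \proper d x) && (d x \proper d v)]].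

Definition reduction (d : {ffun T -> {set T}}) (v u : T) : {set T} :=
  d v :\: Delta (d v) u.

Definition M (d : {ffun T -> {set T}}) (v : T) : {set T} :=
  [set u | wraps d v u &&
     ~~ [exists u', wraps d v u' && (reduction d v u \proper reduction d v u')]].

Definition isbead (s : {ffun T -> {set T}}) (v w : T) (S : {set T}) : Prop :=
  exists x : T, [/\ S = s x, tle x w, x \notin s v &
    forall y : T, tle x y -> tle y w -> (y \in s v) \/ s y = [set y]].

End Orn.

(* Main.v *)
Require Import Defs.
From mathcomp Require Import all_boot.
Set Implicit Arguments. Unset Strict Implicit. Unset Printing Implicit Defensive.

Section Tree.
Variables (T : finType) (t : rtree T).
Local Notation par := (parent t).
Local Notation tle := (tle t).

Lemma tleP x y : reflect (exists n, iter n par x = y) (tle x y).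
Proof.
apply: (iffP idP) => [h|[n <-]]; last exact: fconnect_iter.
by exists (findex par x y); apply: iter_findex.
Qed.

Lemma tle_refl x : tle x x.
Proof. exact: connect0. Qed.

Lemma tle_trans x y z : tle x y -> tle y z -> tle x z.
Proof. exact: connect_trans. Qed.

Lemma tle_par x : tle x (par x).
Proof. exact: fconnect1. Qed.

Lemma iter_root n : iter n par (Defs.root t) = Defs.root t.
Proof. by elim: n => //= n ->; rewrite parent_root. Qed.

Lemma iter_add m n x : iter (m + n) par x = iter m par (iter n par x).
Proof. exact: iterD. Qed.

Lemma tle_anti x y : tle x y -> tle y x -> x = y.
Proof.
move=> /tleP [n hn] /tleP [m hm].
case: n hn => [|n] hn; first by [].
have [r hr] : exists r, iter r par x = Defs.root t.
  by apply/tleP; apply: reach_root.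
have hc : forall k, iter (k * (m + n.+1)) par x = x.
  elim=> // k IH; rewrite mulSn iter_add IH iter_add hn hm //.
have hxr : x = Defs.root t.
  rewrite -(hc r).
  have -> : r * (m + n.+1) = (r * (m + n.+1) - r) + r.
    by rewrite subnK // addnS mulnS leq_addr.
  by rewrite iter_add hr iter_root.
by rewrite -hn hxr iter_root.
Qed.

Lemma tle_step z x : tle z x -> z != x -> tle (par z) x.
Proof.
move=> /tleP [[|n] hn] hne; first by rewrite -hn eqxx in hne.
by apply/tleP; exists n; rewrite -iterSr.
Qed.

Lemma tle_total z a b : tle z a -> tle z b -> tle a b || tle b a.
Proof.
move=> /tleP [n <-] /tleP [m <-].
case: (leqP n m) => h.
  by apply/orP; left; apply/tleP; exists (m - n); rewrite -iter_add subnK.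
by apply/orP; right; apply/tleP; exists (n - m); rewrite -iter_add subnK // ltnW.
Qed.

Lemma tle_parent_between c x : tle c x -> tle x (par c) -> x = c \/ x = par c.
Proof.
move=> h1 h2; case: (eqVneq c x) => [->|hne]; first by left.
by right; apply: tle_anti => //; apply: tle_step.
Qed.


Definition good (S : {set T}) v :=
  [/\ v \in S, forall x, x \in S -> tle x v & forall x, x \in S -> x != v -> par x \in S].

Definition Orn (d : {ffun T -> {set T}}) :=
  (forall v, good (d v) v) /\
  (forall v v' x, x \in d v -> x \in d v' -> d v \subset d v' \/ d v' \subset d v).

Lemma adjIn_sym S : symmetric (adjIn t S).
Proof. by move=> x y; rewrite /adjIn andbCA orbC. Qed.

Lemma orn_good S v : ornament t S -> v \in S -> (forall x, x \in S -> tle x v) ->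
  good S v.
Proof.
move=> /andP [_ /forallP hc] hv hle; split => // x hx hxv.
have := hc x; rewrite hx /= => /forallP /(_ v); rewrite hv /= => /connectP [p0 hp0 hl0].
have H : forall q z, tle z x -> path (adjIn t S) z q -> v = last z q -> par x \in S.
  elim=> [|y q IH] z hzx hp hl /=.
    by move: hl => /= hl; subst z; case/negP: hxv; apply/eqP/tle_anti => //; apply: hle.
  move: hp => /= /andP [/and3P [hz hy hch] hp].
  case/orP: hch => /andP [/eqP hpar hne].
    case: (eqVneq z x) => [ezx|nzx]; first by rewrite -ezx hpar.
    by apply: (IH y) => //; rewrite -hpar; apply: tle_step.
  by apply: (IH y) => //; apply: tle_trans hzx; rewrite -hpar; apply: tle_par.
exact: (H p0 x (tle_refl x)).
Qed.

Lemma good_conn S v x : good S v -> x \in S -> connect (adjIn t S) x v.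
Proof.
case=> hv hle hcl hx; have /tleP [n hn] := hle x hx.
elim: n x hx hn => [|n IH] x hx hn; first by rewrite -hn connect0.
case: (eqVneq x v) => [->|hne]; first exact: connect0.
have hpx := hcl x hx hne.
apply: (connect_trans (y := par x)); last by apply: IH => //; rewrite -iterSr.
apply: connect1; rewrite /adjIn hx hpx /= /child eqxx /=.
apply/orP; left; apply/eqP => hfix.
have : forall k, iter k par x = x by elim=> //= k ->; rewrite -hfix.
by move=> /(_ n.+1); rewrite hn => hvx; rewrite hvx eqxx in hne.
Qed.

Lemma good_orn S v : good S v -> ornament t S.
Proof.
move=> hg; have [hv _ _] := hg; apply/andP; split.
  by apply/set0Pn; exists v.
apply/forallP => x; apply/implyP => hx; apply/forallP => y; apply/implyP => hy.
apply: (connect_trans (good_conn hg hx)).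
by rewrite (sym_connect_sym (@adjIn_sym S)); apply: good_conn.
Qed.

Lemma ornP d : ornamentation t d <-> Orn d.
Proof.
split.
  case/andP => /andP [/forallP h1 /forallP h2] /forallP h3; split.
    move=> v; have /andP [hv /forallP hl] := h2 v.
    apply: orn_good => // x hx; exact: (implyP (hl x) hx).
  move=> v v' x hx hx'; have := h3 v => /forallP /(_ v') /or3P [->|->|]; auto.
  move/disjoint_setI0 => h; have : x \in d v :&: d v' by rewrite inE hx hx'.
  by rewrite h inE.
case=> hg hl; apply/andP; split; first (apply/andP; split); apply/forallP => v.
- exact: (good_orn (hg v)).
- have [hv hle _] := hg v; rewrite hv /=; apply/forallP => x; apply/implyP; exact: hle.
- apply/forallP => v'; case: (boolP [disjoint d v & d v']) => hd; first by rewrite !orbT.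
  have [x] : exists x, x \in d v :&: d v'.
    by apply/set0Pn; move: hd; rewrite -setI_eq0.
  rewrite inE => /andP [hx hx']; case: (hl v v' x hx hx') => -> //; by rewrite orbT.
Qed.

Lemma good_convex S v a y : good S v -> a \in S -> tle a y -> tle y v -> y \in S.
Proof.
case=> hv hle hcl ha /tleP [n hn] hyv.
elim: n a ha hn => [|n IH] a ha hn; first by rewrite -hn.
case: (eqVneq a v) => [eav|nav].
  have ey : y = v by apply: tle_anti => //; rewrite -hn eav; apply/tleP; exists n.+1.
  by rewrite ey.
by apply: (IH (par a)); [apply: hcl | rewrite -iterSr].
Qed.

Section OrnL.
Variable d : {ffun T -> {set T}}.
Hypothesis hd : Orn d.

Lemma orn_self y : y \in d y.
Proof. by have [h _ _] := hd.1 y. Qed.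

Lemma orn_le z y : z \in d y -> tle z y.
Proof. by have [_ h _] := hd.1 y; apply: h. Qed.

Lemma orn_nest z y : z \in d y -> d z \subset d y.
Proof.
move=> hz; case: (hd.2 z y z (orn_self z) hz) => // hs.
have e : y = z by apply: tle_anti; [apply: orn_le; apply: (subsetP hs); apply: orn_self | apply: orn_le].
by rewrite e.
Qed.

Lemma orn_proper a b : d a \subset d b -> a != b -> d a \proper d b.
Proof.
move=> hs hne; apply/properP; split => //; exists b; first exact: orn_self.
apply/negP => hb; case/negP: hne; apply/eqP; apply: tle_anti.
  by apply: orn_le; apply: (subsetP hs); apply: orn_self.
exact: orn_le.
Qed.

Lemma wraps_in x b : wraps d x b -> [/\ b \in d x, b != x, d b \subset d x & tle b x].
Proof.
case/and3P => hne hs _; have hb : b \in d x by apply: (subsetP hs); apply: orn_self.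
by split => //; apply: orn_le.
Qed.

Lemma CT a v : d a \subset d v -> a != v -> exists y, wraps d v y /\ d a \subset d y.
Proof.
move=> hs hne.
pose P y := [&& d a \subset d y, d y \subset d v & y != v].
have Pa : P a by rewrite /P subxx hs hne.
case: (@arg_maxnP _ a P (fun y => #|d y|) Pa) => y /and3P [h1 h2 h3] Hmax.
exists y; split => //; apply/and3P; split => //.
apply/existsP => -[x /andP [p1 p2]].
have Px : P x.
  rewrite /P (subset_trans h1 (proper_sub p1)) (proper_sub p2) /=.
  by apply/eqP => e; rewrite e properE subxx andbF in p2.
by have := Hmax x Px; rewrite /= leqNgt (proper_card p1).
Qed.

Lemma red_mem x b z : (z \in reduction t d x b) = (z \in d x) && ~~ tle z b.
Proof. by rewrite /reduction /Delta !inE; case: (z \in d x); case: (tle z b). Qed.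

Lemma red_proper x b b' : b \in d x -> b' \in d x ->
  (reduction t d x b \proper reduction t d x b') = (tle b' b && (b' != b)).
Proof.
move=> hb hb'; apply/idP/idP.
  case/properP => hs [z hz hnz].
  have hb'b : tle b' b.
    apply/negPn/negP => hn; have : b' \in reduction t d x b by rewrite red_mem hb' hn.
    by move/(subsetP hs); rewrite red_mem tle_refl andbF.
  rewrite hb'b /=; apply/eqP => e; subst b'; by rewrite hz in hnz.
case/andP => hle hne; apply/properP; split.
  apply/subsetP => z; rewrite !red_mem => /andP [-> hn] /=.
  by apply/negP => hzb'; case/negP: hn; apply: tle_trans hle.
exists b; first rewrite red_mem hb /=.
  by apply/negP => hbb'; case/negP: hne; apply/eqP; apply: tle_anti.
by rewrite red_mem tle_refl andbF.
Qed.

Lemma MP x b : b \in M t d x <->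
  (wraps d x b /\ forall b', wraps d x b' -> tle b' b -> b' = b).
Proof.
rewrite /M inE; split.
  case/andP => hw /existsPn hn; split => // b' hw' hle.
  have := hn b'; rewrite hw' /= red_proper; first by rewrite hle /= negbK => /eqP.
    by have [] := wraps_in hw.
  by have [] := wraps_in hw'.
case=> hw hmin; rewrite hw /=; apply/existsPn => b'; apply/negP => /andP [hw' hp].
move: hp; rewrite red_proper; last by have [] := wraps_in hw'.
  by case/andP => hle hne; rewrite (hmin b' hw' hle) eqxx in hne.
by have [] := wraps_in hw.
Qed.

Lemma Mex x w : wraps d x w -> exists b, b \in M t d x /\ tle b w.
Proof.
move=> hw.
pose P b := wraps d x b && tle b w.
have Pw : P w by rewrite /P hw tle_refl.
case: (@arg_minnP _ w P (fun b => #|Delta t (d x) b|) Pw) => b /andP [hb hbw] Hmin.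
exists b; split => //; apply/MP; split => // b' hw' hle.
have Pb' : P b' by rewrite /P hw' (tle_trans hle hbw).
have hc := Hmin b' Pb'.
have hsub : Delta t (d x) b' \subset Delta t (d x) b.
  by apply/subsetP => z; rewrite !inE => /andP [-> h]; apply: tle_trans hle.
have : Delta t (d x) b' == Delta t (d x) b by rewrite eqEcard hsub hc.
move/eqP => e; apply: tle_anti => //.
have : b \in Delta t (d x) b by rewrite inE tle_refl andbT; have [] := wraps_in hb.
by rewrite -e inE => /andP [].
Qed.

End OrnL.

Definition redf (d : {ffun T -> {set T}}) x b : {ffun T -> {set T}} :=
  [ffun y => if y == x then reduction t d x b else d y].

Lemma wraps_proper d x y : Orn d -> wraps d x y -> d y \proper d x.
Proof. move=> hd hw; have [_ hne hs _] := wraps_in hd hw; exact: orn_proper. Qed.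

Lemma no_between d x b y : Orn d -> wraps d x b -> d b \proper d y -> d y \proper d x -> False.
Proof.
move=> hd /and3P [_ _ /existsP hn] p1 p2; apply: hn; exists y; by rewrite p1 p2.
Qed.

Lemma red_orn d x b : Orn d -> wraps d x b -> Orn (redf d x b).
Proof.
move=> hd hw; have [hbx hne hsub hbl] := wraps_in hd hw.
have hxR : x \in reduction t d x b.
  rewrite red_mem orn_self //=; apply/negP => h; case/negP: hne; apply/eqP.
  exact: tle_anti.
have hlam : forall y', y' != x -> forall z, z \in reduction t d x b -> z \in d y' ->
    reduction t d x b \subset d y' \/ d y' \subset reduction t d x b.
  move=> y' hy' z hzR hz'.
  have hzx : z \in d x by move: hzR; rewrite red_mem => /andP [].
  case: (hd.2 x y' z hzx hz') => hs.
    by left; apply: subset_trans hs; apply/subsetP => q; rewrite red_mem => /andP [].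
  right; apply/subsetP => q hq; rewrite red_mem (subsetP hs _ hq) /=.
  apply/negP => hqb.
  have hzb : ~~ tle z b by move: hzR; rewrite red_mem => /andP [].
  have hqy' := orn_le hd hq.
  case/orP: (tle_total hqy' hqb) => h.
    by case/negP: hzb; apply: (tle_trans (orn_le hd hz') h).
  have hby' : b != y'.
    apply/eqP => e0; rewrite -e0 in hz'; case/negP: hzb; exact: (orn_le hd hz').
  have hb' : b \in d y'.
    by apply: (good_convex (hd.1 y') hq hqb h).
  apply: (no_between hd hw (y := y')).
    by apply: orn_proper => //; apply: orn_nest.
  exact: orn_proper.
split.
  move=> y; rewrite ffunE; case: (eqVneq y x) => [->|hyx]; last exact: hd.1.
  have [_ hle hcl] := hd.1 x.
  split => // [z|z]; rewrite red_mem => /andP [hz hzb]; first exact: hle.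
  move=> hzx; rewrite red_mem (hcl z hz hzx) /=; apply/negP => h.
  by case/negP: hzb; apply: (tle_trans (tle_par z) h).
move=> y y' z; rewrite !ffunE.
case: (eqVneq y x) => [eyx|hyx]; case: (eqVneq y' x) => [ey'x|hy'x].
- by move=> _ _; left.
- by move=> hzR hz'; exact: hlam hy'x z hzR hz'.
- by move=> hz hzR; case: (hlam y hyx z hzR hz); auto.
- exact: hd.2.
Qed.

Lemma red_olt d x b : Orn d -> wraps d x b -> olt (redf d x b) d.
Proof.
move=> hd hw; have [hbx _ _ _] := wraps_in hd hw.
apply/andP; split.
  apply/negP => /eqP e.
  have : b \in redf d x b x by rewrite e.
  by rewrite ffunE eqxx red_mem tle_refl andbF.
apply/forallP => y; rewrite ffunE; case: (eqVneq y x) => [->|_]; last exact: subxx.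
by apply/subsetP => q; rewrite red_mem => /andP [].
Qed.

Lemma oleP (d1 d2 : {ffun T -> {set T}}) : reflect (forall y, d1 y \subset d2 y) (ole d1 d2).
Proof. exact: forallP. Qed.

Lemma L d e : Orn d -> Orn e -> olt e d ->
  exists x b, b \in M t d x /\ b \notin e x.
Proof.
move=> hd he /andP [hne /oleP hle].
case: (boolP [exists x, exists b, (b \in M t d x) && (b \notin e x)]).
  by case/existsP => x /existsP [b /andP [h1 h2]]; exists x, b.
move=> /existsPn H.
have H' : forall x b, b \in M t d x -> b \in e x.
  move=> x b hb; have := H x => /existsPn /(_ b); by rewrite hb /= negbK.
have [x0 hx0] : exists x, e x != d x.
  case: (boolP [exists x, e x != d x]) => [/existsP //|/existsPn hn].
  case/negP: hne; apply/eqP/ffunP => x; apply/eqP; have := hn x; by rewrite negbK.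
pose P x := e x != d x.
case: (@arg_minnP _ x0 P (fun x => #|d x|) hx0) => x hPx Hmin.
have [z hz hnz] : exists2 z, z \in d x & z \notin e x.
  by apply/subsetPn; move: hPx; rewrite /P eqEsubset hle /=.
have hzx : z != x by apply/eqP => e0; subst z; rewrite orn_self in hnz.
have [w [hw hzw]] := CT (orn_nest hd hz) hzx.
have [b [hb hbw]] := Mex hd hw.
have hbe := H' x b hb.
have [_ _ _ hwx] := wraps_in hd hw.
have hwe : w \in e x by apply: (good_convex (he.1 x) hbe hbw hwx).
have hew : e w = d w.
  apply/eqP; apply/negPn/negP => hPw.
  have := Hmin w hPw; rewrite /= leqNgt.
  by rewrite (proper_card (wraps_proper hd hw)).
case/negP: hnz; apply: (subsetP (orn_nest he hwe)); rewrite hew.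
by apply: (subsetP hzw); apply: orn_self.
Qed.

Lemma le_red d e x b : Orn d -> Orn e -> ole e d -> b \in d x -> b \notin e x ->
  ole e (redf d x b).
Proof.
move=> hd he /oleP hle hbx hbe; apply/oleP => y; rewrite ffunE.
case: (eqVneq y x) => [->|_]; last exact: hle.
apply/subsetP => z hz; rewrite red_mem (subsetP (hle x) _ hz) /=.
apply/negP => hzb; case/negP: hbe.
exact: (good_convex (he.1 x) hz hzb (orn_le hd hbx)).
Qed.

Lemma ole_anti (d1 d2 : {ffun T -> {set T}}) : ole d1 d2 -> ole d2 d1 -> d1 = d2.
Proof.
move=> /oleP h1 /oleP h2; apply/ffunP => y; apply/eqP; by rewrite eqEsubset h1 h2.
Qed.

Lemma olt_ole (d1 d2 : {ffun T -> {set T}}) : olt d1 d2 -> ole d1 d2.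
Proof. by case/andP. Qed.

Lemma cover_red d x b : Orn d -> b \in M t d x -> covby t (redf d x b) d.
Proof.
move=> hd hb; have [hw hmin] := (MP hd x b).1 hb.
have hro := red_orn hd hw.
have [hbx _ _ _] := wraps_in hd hw.
apply/and4P; split; [by apply/ornP | by apply/ornP | exact: red_olt |].
apply/forallP => e; apply/negP => /and3P [/ornP he hlt1 hlt2].
have [x' [b' [hb' hb'e]]] := L hd he hlt2.
have [hw' _] := (MP hd x' b').1 hb'.
have [hb'x' _ _ _] := wraps_in hd hw'.
move: hlt1 => /andP [hne /oleP hle1].
case: (eqVneq x' x) => [ex|nx].
  subst x'.
  have hb'b : tle b' b.
    apply/negPn/negP => hn; case/negP: hb'e; apply: (subsetP (hle1 x)).
    by rewrite ffunE eqxx red_mem hb'x' hn.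
  have eb := hmin b' hw' hb'b; subst b'.
  have := le_red hd he (olt_ole hlt2) hbx hb'e => h2.
  by case/negP: hne; apply/eqP; apply: ole_anti => //; apply/oleP.
case/negP: hb'e; apply: (subsetP (hle1 x')); by rewrite ffunE (negbTE nx).
Qed.

Lemma cover_inv d e : Orn d -> covby t e d -> exists x b, b \in M t d x /\ e = redf d x b.
Proof.
move=> hd /and4P [/ornP he _ hlt /forallP hc].
have [x [b [hb hbe]]] := L hd he hlt.
exists x, b; split => //.
have [hw _] := (MP hd x b).1 hb.
have [hbx _ _ _] := wraps_in hd hw.
have h1 := le_red hd he (olt_ole hlt) hbx hbe.
case: (eqVneq e (redf d x b)) => // hne.
have := hc (redf d x b); rewrite red_olt // andbT.
have -> : ornamentation t (redf d x b) by apply/ornP; exact: red_orn.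
by rewrite /olt hne h1.
Qed.

Lemma popP d y z : Orn d ->
  (z \in pop t d y) <-> (z \in d y /\ forall b, b \in M t d y -> ~~ tle z b).
Proof.
move=> hd; rewrite /pop ffunE inE; split.
  case/andP => hz /bigcapP hc; split => // b hb.
  by have := hc _ (cover_red hd hb); rewrite ffunE eqxx red_mem => /andP [_ ->].
case=> hz hb; rewrite hz /=; apply/bigcapP => e he.
have [x [b [hb' ->]]] := cover_inv hd he; rewrite ffunE.
case: (eqVneq y x) => [exy|_]; last by [].
by subst y; rewrite red_mem hz /=; apply: hb.
Qed.

Lemma pop_sub d y : pop t d y \subset d y.
Proof. by apply/subsetP => z; rewrite /pop ffunE inE => /andP []. Qed.

Lemma pop_orn d : Orn d -> Orn (pop t d).
Proof.
move=> hd.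
have hlam : forall y y' a, d y \subset d y' -> a \in pop t d y -> a \in pop t d y' ->
    pop t d y \subset pop t d y'.
  move=> y y' a hs ha ha'.
  case: (eqVneq y y') => [->|hne]; first exact: subxx.
  apply/subsetP => q hq; have [hqy hqb] := (popP y q hd).1 hq.
  apply/(popP y' q hd); split; first exact: (subsetP hs).
  move=> b' hb'; apply/negP => hqb'.
  have [hw' hmin'] := (MP hd y' b').1 hb'.
  have hqy' := orn_le hd hqy.
  case/orP: (tle_total hqy' hqb') => h.
    have [_ hab] := (popP y' a hd).1 ha'.
    have [hay _] := (popP y a hd).1 ha.
    by have := hab b' hb'; rewrite (tle_trans (orn_le hd hay) h).
  have hb'y : b' != y.
    apply/eqP => e0; subst b'.
    have [_ hab] := (popP y' a hd).1 ha'.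
    have [hay _] := (popP y a hd).1 ha.
    by have := hab y hb'; rewrite (orn_le hd hay).
  have hb'in : b' \in d y by exact: (good_convex (hd.1 y) hqy hqb' h).
  apply: (no_between hd hw' (y := y)).
    by apply: orn_proper => //; apply: orn_nest.
  exact: orn_proper.
split.
  move=> y; have [hy hle hcl] := hd.1 y; split.
  - apply/(popP y y hd); split => // b hb; apply/negP => hyb.
    have [hw _] := (MP hd y b).1 hb; have [_ hne _ hby] := wraps_in hd hw.
    by case/negP: hne; apply/eqP; apply: tle_anti.
  - by move=> x hx; apply: hle; apply: (subsetP (pop_sub d y)).
  - move=> x /(popP y x hd) [hx hxb] hxy; apply/(popP y (par x) hd); split.
      exact: hcl.
    move=> b hb; apply/negP => h; have := hxb b hb.
    by rewrite (tle_trans (tle_par x) h).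
move=> y y' a ha ha'.
have hay := subsetP (pop_sub d y) _ ha.
have hay' := subsetP (pop_sub d y') _ ha'.
case: (hd.2 y y' a hay hay') => hs.
  by left; apply: hlam ha ha'.
by right; apply: hlam ha' ha.
Qed.

Lemma P1 r v u : Orn r -> u \in M t (pop t r) v -> r u = [set u].
Proof.
move=> hr hu; have hs := pop_orn hr.
apply/eqP; rewrite eqEsubset; apply/andP; split; last first.
  by apply/subsetP => z; rewrite inE => /eqP ->; apply: orn_self.
apply/subsetP => z hz; rewrite inE; apply/negPn/negP => hzu.
have [w [hw _]] := CT (orn_nest hr hz) hzu.
have [b0 [hb0 hb0w]] := Mex hr hw.
have [hwb0 _] := (MP hr u b0).1 hb0.
have [hb0u hb0nu _ hb0le] := wraps_in hr hwb0.
have [hwu hmin] := (MP hs v u).1 hu.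
have [huv hunv hsuv hule] := wraps_in hs hwu.
have hb0nd : b0 \notin pop t r u.
  apply/negP => /(popP u b0 hr) [_ /(_ b0 hb0)]; by rewrite tle_refl.
have huv' : u \in r v by apply: (subsetP (pop_sub r v)).
have hruv : r u \subset r v := orn_nest hr huv'.
have hb0v : b0 \in pop t r v.
  apply/(popP v b0 hr); split; first exact: (subsetP hruv).
  move=> b hb; apply/negP => hb0b.
  have [hwb _] := (MP hr v b).1 hb.
  case: (eqVneq b u) => [ebu|nbu].
    subst b; have [_ /(_ u hb)] := (popP v u hr).1 huv; by rewrite tle_refl.
  case/orP: (tle_total hb0le hb0b) => h.
    have [_ /(_ b hb)] := (popP v u hr).1 huv; by rewrite h.
  have hbu : b \in r u by exact: (good_convex (hr.1 u) hb0u hb0b h).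
  apply: (no_between hr hwb (y := u)).
    by apply: orn_proper => //; apply: orn_nest.
  exact: orn_proper.
have hb0nv : b0 != v.
  by apply/eqP => e0; subst b0; case/negP: hunv; apply/eqP; apply: tle_anti.
have [z' [hwz' hsz']] := CT (orn_nest hs hb0v) hb0nv.
have hb0z' : b0 \in pop t r z' by apply: (subsetP hsz'); apply: orn_self.
have hb0lz' := orn_le hs hb0z'.
case: (eqVneq z' u) => [ez|nz].
  by subst z'; rewrite hb0z' in hb0nd.
case/orP: (tle_total hb0le hb0lz') => h.
  have huz : u \in pop t r z' by exact: (good_convex (hs.1 z') hb0z' hb0le h).
  apply: (no_between hs hwu (y := z')); last exact: wraps_proper hs hwz'.
  have hn : u != z' by rewrite eq_sym. exact: (orn_proper hs (orn_nest hs huz) hn).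
by case/eqP: nz; apply: hmin.
Qed.

Lemma iter_orn d j : Orn d -> Orn (iter j (pop t) d).
Proof. move=> hd; elim: j => //= j IH; exact: pop_orn. Qed.

Lemma iter_sub d j y : iter j (pop t) d y \subset d y.
Proof.
elim: j => [|j IH] /=; first exact: subxx.
exact: subset_trans (pop_sub _ y) IH.
Qed.

End Tree.

Theorem lemma5p2 (T : finType) (t : rtree T) (d : {ffun T -> {set T}})
  (hd : exists d0, ornamentation t d0 /\ d = pop t d0) (v u : T)
  (hu : u \in M t d v) :
  d u = [set u] /\
  (forall w : T, child t w v -> w \in d v -> u \in Delta t (d v) w ->
     forall k : nat, 1 <= k -> w \in iter k (pop t) d v ->
       isbead t (iter k (pop t) d) v w [set u]).
Proof.
case: hd => d0 [/ornP h0 ed].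
have hs : Orn t d by rewrite ed; exact: pop_orn.
have hdu : d u = [set u].
  apply/eqP; rewrite eqEsubset; apply/andP; split.
    rewrite -(P1 h0 (u := u) (v := v)); last by rewrite -ed.
    by rewrite ed; exact: pop_sub.
  by apply/subsetP => z; rewrite inE => /eqP ->; exact: (orn_self hs).
split => // w hwv hwd hud k hk _.
pose sg j := iter j (pop t) d.
have hsg : forall j, Orn t (sg j) by move=> j; exact: iter_orn.
have inv : forall j y, y \in d v -> y \in sg j v \/ sg j y = [set y].
  elim=> [|j IH] y hy; first by left.
  have hsub : sg j.+1 y \subset sg j y by exact: pop_sub.
  case: (IH y hy) => [hyj|hyj]; last first.
    right; apply/eqP; rewrite eqEsubset -{1}hyj hsub /=.
    by apply/subsetP => z; rewrite inE => /eqP ->; exact: (orn_self (hsg j.+1)).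
  case: (boolP (y \in sg j.+1 v)) => [|hyn]; first by left.
  right.
  have [b [hb hyb]] : exists b, b \in M t (sg j) v /\ tle t y b.
    case: (boolP [exists b, (b \in M t (sg j) v) && tle t y b]).
      by case/existsP => b /andP [? ?]; exists b.
    move=> /existsPn hn; case/negP: hyn; apply/(popP v y (hsg j)); split => //.
    by move=> b hb; have := hn b; rewrite hb.
  have esg : sg j = pop t (iter j (pop t) d0) by rewrite /sg ed -iterSr iterS.
  have hrb : iter j (pop t) d0 b = [set b].
    apply: (P1 (iter_orn j h0) (v := v)).
    by rewrite -esg.
  have hsgb : sg j b = [set b].
    apply/eqP; rewrite eqEsubset; apply/andP; split.
      rewrite -hrb esg; exact: pop_sub.
    by apply/subsetP => z; rewrite inE => /eqP ->; exact: (orn_self (hsg j)).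
  have eyb : y = b.
    apply/eqP; apply/negPn/negP => hyb'.
    have [hwb hmin] := (MP (hsg j) v b).1 hb.
    have [_ hbnv _ hbv] := wraps_in (hsg j) hwb.
    have hynv : y != v.
      apply/eqP => e0; rewrite e0 in hyb; case/negP: hbnv; apply/eqP; exact: tle_anti hbv hyb.
    have [z [hwz hyz]] := CT (orn_nest (hsg j) hyj) hynv.
    have hyz' : y \in sg j z by apply: (subsetP hyz); exact: (orn_self (hsg j)).
    have hylz := orn_le (hsg j) hyz'.
    case: (eqVneq z b) => [ezb|nzb].
      by subst z; move: hyz'; rewrite hsgb inE => /eqP eb; rewrite eb eqxx in hyb'.
    case/orP: (tle_total hyb hylz) => h.
      have hbz : b \in sg j z by exact: (good_convex ((hsg j).1 z) hyz' hyb h).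
      apply: (no_between (hsg j) hwb (y := z)); last exact: wraps_proper (hsg j) hwz.
      have hn : b != z by rewrite eq_sym.
      exact: (orn_proper (hsg j) (orn_nest (hsg j) hbz) hn).
    by case/eqP: nzb; apply: hmin.
  subst y; apply/eqP; rewrite eqEsubset -{1}hsgb hsub /=.
  by apply/subsetP => z; rewrite inE => /eqP ->; exact: (orn_self (hsg j.+1)).
have huv : u \in d v /\ tle t u w by move: hud; rewrite inE => /andP [].
case: huv => huv huw.
have hwv' : tle t w v by case/andP: hwv => /eqP <- _; apply: tle_par.
exists u; split.
- apply/eqP; rewrite eqEsubset; apply/andP; split.
    by apply/subsetP => z; rewrite inE => /eqP ->; exact: (orn_self (hsg k)).
  by rewrite -hdu; apply: iter_sub.
- exact: huw.
- case: k hk => [//|k] _.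
  apply/negP => h.
  have : u \in pop t d v.
    by apply: (subsetP (iter_sub t (pop t d) k v)); rewrite -iterSr.
  by move/(popP v u hs) => [_ /(_ u hu)]; rewrite tle_refl.
- move=> y huy hyw.
  have hy : y \in d v by exact: (good_convex (hs.1 v) huv huy (tle_trans hyw hwv')).
  exact: inv.
Qed.
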